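(* Let $F_0$ be a weighted QF-NIA formula consisting of a set $H_0$ of hard clauses and a set $S_0=\{[D_1,\Omega_1],\dots,[D_m,\Omega_m]\}$ of soft clauses with positive natural-number weights. Consider the following procedure $\mathrm{SolveMaxSMT}(F_0)$. Initialization. Choose artificial bounds $B$ sufficient to linearize $F_0$. Linearize to obtain linear hard clauses $H$ and linear soft clauses $S$ (see context). Set $\mathit{bsf}:=\mathrm{undef}$ and $\mathit{msc}:=\infty$. Loop. Repeat until a time limit is exceeded. Call a threshold Max-SMT(QF-LIA) oracle on $(H,S,B,\mathit{msc})$. This oracle returns $\mathrm{Unsat}$ if there is no integer model $\alpha$ of $H$ with $\mathrm{cost}_S(\alpha)\le\mathit{msc}$. Otherwise it returns a model $M$ of $H$ with $\mathrm{cost}_S(M)\le\mathit{msc}$ minimizing the pair $(\mathrm{cost}_B(M),\mathrm{cost}_S(M))$ lexicographically among all such models. Act on the result as follows. - If the oracle returns $\mathrm{Unsat}$: return $\langle\mathrm{Unsat},\mathrm{undef}\rangle$ if $\mathit{bsf}=\mathrm{undef}$, and $\langle\mathrm{Sat},\mathit{bsf}\rangle$ otherwise. - Else, if $\mathrm{cost}_B(M)=0$: set $\mathit{bsf}:=M$ and $\mathit{msc}:=\mathrm{cost}_S(M)-1$. - Else: choose a nonempty set of bounds of $B$ violated by $M$. Replace each such $V\ge L$ by $V\ge M(V)$ and each such $V\le U$ by $V\le M(V)$. Add to $H$ the case-splitting clauses $V=K\rightarrow v_Q=Q[V:=K]$ for every value $K$ newly included in the domain of $V$ and every monomial $Q$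 linearized using $V$. Timeout. If the time limit is exceeded, return $\langle\mathrm{Unknown},\mathrm{undef}\rangle$. Then: (i) if $\mathrm{SolveMaxSMT}(F_0)$ returns $\langle\mathrm{Sat},M\rangle$, then $H_0$ is satisfiable and $M$ (restricted to the variables of $F_0$) is a model of $H_0$ that minimizes the sum of the weights of the clauses of $S_0$ it falsifies, among all integer models of $H_0$; (ii) if $\mathrm{SolveMaxSMT}(F_0)$ returns $\langle\mathrm{Unsat},\mathrm{undef}\rangle$, then $H_0$ is unsatisfiable over the integers.
   Context: QF-NIA clauses are disjunctions of polynomial inequalities with integer coefficients over integer-valued variables. Artificial bounds are a finite set $B$ of constraints $V\ge L$ or $V\le U$ ($L,U\in\mathbb{Z}$). Linearization. While some non-linear monomial $Q$ occurs, pick a variable $V$ of $Q$ having both a lower bound $l$ and an upper bound $u$ (from $F_0$ or $B$). Introduce a fresh integer variable $v_Q$ and replace every occurrence of $Q$ by $v_Q$. Add, for each integer $K$ with $l\le K\le u$, the case-splitting clause $V=K\rightarrow v_Q=Q[V:=K]$, where $Q[V:=K]$ is $Q$ with $V$ evaluated at $K$. New non-linear monomials are processed in the same way. Linear clauses. $H$ consists of the clauses of $H_0$ with monomials replaced by their fresh variables, together with all case-splitting clauses. $S$ consists of the soft clauses $[D_i',\Omega_i]$, where $D_i'$ is $D_i$ with monomials replaced. Costs. For an assignment $\alpha$, the bound cost $\mathrm{cost}_B(\alpha)$ is the number of bounds of $B$ (each treated as a soft clause of weight $1$) that $\alpha$ violates. The soft cost $\mathrm{cost}_S(\alpha)$ is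 $\sum\{\Omega : [D,\Omega]\in S,\ \alpha\not\models D\}$. *)

(* Defs.v *)
From Stdlib Require List.
From HB Require Import structures.
From mathcomp Require Import all_boot all_order all_algebra.
Set Implicit Arguments. Unset Strict Implicit. Unset Printing Implicit Defensive.
Import Order.TTheory GRing.Theory Num.Theory.
Local Open Scope ring_scope.

Definition var := nat.
Definition assignment := var -> int.

(* A monomial is a finite multiset of variables (their product);
   [::] is the constant monomial 1.  Two monomials are the same monomial
   iff they are permutations of each other ([perm_eq]). *)
Definition monomial := seq var.
Definition term := (int * monomial)%type.
Definition poly := seq term.

Inductive cmp := CLe | CLt | CEq | CNe | CGe | CGt.
Definition atom := (poly * cmp)%type.
Definition clause := seq atom.
Definition soft := (clause * nat)%type.

Definition eval_mono (a : assignment) (m : monomial) : int :=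
  \prod_(x <- m) a x.
Definition eval_poly (a : assignment) (p : poly) : int :=
  \sum_(t <- p) t.1 * eval_mono a t.2.
Definition eval_cmp (c : cmp) (z : int) : bool :=
  match c with
  | CLe => z <= 0 | CLt => z < 0 | CEq => z == 0
  | CNe => z != 0 | CGe => 0 <= z | CGt => 0 < z
  end.
Definition sat_atom (a : assignment) (l : atom) : bool :=
  eval_cmp l.2 (eval_poly a l.1).
Definition sat_clause (a : assignment) (C : clause) : bool :=
  has (sat_atom a) C.
Definition sat_hard (a : assignment) (H : seq clause) : bool :=
  all (sat_clause a) H.
Definition cost_S (a : assignment) (S : seq soft) : nat :=
  (\sum_(s <- S | ~~ sat_clause a s.1) s.2)%N.

Definition monos_clause (C : clause) : seq monomial :=
  flatten [seq [seq t.2 | t <- l.1] | l <- C].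
Definition monos_F0 (H0 : seq clause) (S0 : seq soft) : seq monomial :=
  flatten [seq monos_clause C | C <- H0] ++ flatten [seq monos_clause s.1 | s <- S0].
Definition vars_F0 (H0 : seq clause) (S0 : seq soft) : seq var :=
  flatten (monos_F0 H0 S0).

Definition nonlinear (m : monomial) : bool := (1 < size m)%N.

Inductive bound := Lower of var & int
                 | Upper of var & int.

Definition bound_var (b : bound) : var :=
  match b with Lower v _ => v | Upper v _ => v end.
Definition sat_bound (a : assignment) (b : bound) : bool :=
  match b with Lower v L => L <= a v | Upper v U => a v <= U end.
Definition cost_B (a : assignment) (B : seq bound) : nat :=
  count (fun b => ~~ sat_bound a b) B.

Definition bound_clause (b : bound) : clause :=
  match b with
  | Lower v L => [:: ([:: (1, [:: v]); (- L, [::])], CGe)]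
  | Upper v U => [:: ([:: (1, [:: v]); (- U, [::])], CLe)]
  end.
Definition clause_bound (C : clause) : option bound :=
  match C with
  | [:: ([:: (a, [:: v]); (c, [::])], CGe)] =>
      if a == 1 then Some (Lower v (- c)) else None
  | [:: ([:: (a, [:: v]); (c, [::])], CLe)] =>
      if a == 1 then Some (Upper v (- c)) else None
  | _ => None
  end.
Definition f0_bounds (H0 : seq clause) : seq bound := pmap clause_bound H0.

Definition lowers (bs : seq bound) (v : var) : seq int :=
  pmap (fun b => if b is Lower w L then (if w == v then Some L else None) else None) bs.
Definition uppers (bs : seq bound) (v : var) : seq int :=
  pmap (fun b => if b is Upper w U then (if w == v then Some U else None) else None) bs.

Definition dom_of (bs : seq bound) (v : var) : option (int * int) :=
  match lowers bs v, uppers bs v with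
  | l :: ls, u :: us => Some (foldr Num.max l ls, foldr Num.min u us)
  | _, _ => None
  end.

Definition irange (l u : int) : seq int :=
  if l <= u then [seq l + (k%:Z) | k <- iota 0 (`|u - l|%N).+1] else [::].
Definition dom_range (bs : seq bound) (v : var) : seq int :=
  if dom_of bs v is Some (l, u) then irange l u else [::].

(* One linearization step: the non-linear monomial Q is replaced by the
   fresh variable v_Q, the variable V of Q having been picked. *)
Record ldef := LDef { ld_mono : monomial; ld_var : var; ld_fresh : var }.

Definition ld_rest (d : ldef) : monomial := filter (predC1 (ld_var d)) (ld_mono d).
Definition ld_exp (d : ldef) : nat := count_mem (ld_var d) (ld_mono d).

Definition find_def (defs : seq ldef) (m : monomial) : option ldef :=
  ohead [seq d <- defs | perm_eq (ld_mono d) m].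

Definition repl_term (defs : seq ldef) (t : term) : term :=
  if nonlinear t.2 then
    (if find_def defs t.2 is Some d then (t.1, [:: ld_fresh d]) else t)
  else t.
Definition repl_clause (defs : seq ldef) (C : clause) : clause :=
  [seq ([seq repl_term defs t | t <- l.1], l.2) | l <- C].

(* The case-splitting clause  V = K -> v_Q = Q[V:=K],
   where Q[V:=K] = K^e * R (R = Q without V, itself linearized):
   (V - K != 0) \/ (v_Q - K^e * R' = 0). *)
Definition split_clause (defs : seq ldef) (d : ldef) (K : int) : clause :=
  [:: ([:: (1, [:: ld_var d]); (- K, [::])], CNe);
      ((1, [:: ld_fresh d]) :: [:: repl_term defs (- (K ^+ ld_exp d), ld_rest d)], CEq)].

(* [defs] is a linearization of F0 = (H0, S0) w.r.t. the artificial bounds B: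
   it is exactly the set of monomials processed by the linearization procedure
   (every non-linear monomial of F0, and recursively every non-linear
   Q[V:=K]-monomial R, is processed exactly once; nothing else is processed),
   each with a picked variable V of Q having both a lower and an upper bound
   (from F0 or B), and a fresh variable v_Q. *)
Definition lin_ok (H0 : seq clause) (S0 : seq soft) (B : seq bound)
    (defs : seq ldef) : Prop :=
  [/\ uniq [seq ld_fresh d | d <- defs],
      (forall d, List.In d defs ->
         ld_fresh d \notin vars_F0 H0 S0 /\ ld_fresh d \notin [seq bound_var b | b <- B]),
      pairwise (fun d1 d2 => ~~ perm_eq (ld_mono d1) (ld_mono d2)) defs,
      (forall d, List.In d defs ->
         [/\ nonlinear (ld_mono d), ld_var d \in ld_mono d,
             dom_of (f0_bounds H0 ++ B) (ld_var d) != None,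
             nonlinear (ld_rest d) -> has (fun d' => perm_eq (ld_mono d') (ld_rest d)) defs
           & has (perm_eq (ld_mono d)) (monos_F0 H0 S0)
             || has (fun d' => perm_eq (ld_rest d') (ld_mono d)) defs]) &
      (forall m, m \in monos_F0 H0 S0 -> nonlinear m ->
         has (fun d => perm_eq (ld_mono d) m) defs)].

Definition splits (defs : seq ldef) (dom : var -> seq int) : seq clause :=
  flatten [seq [seq split_clause defs d K | K <- dom (ld_var d)] | d <- defs].

Definition init_H (H0 : seq clause) (B : seq bound) (defs : seq ldef) : seq clause :=
  [seq repl_clause defs C | C <- H0] ++ splits defs (dom_range (f0_bounds H0 ++ B)).
Definition lin_S (defs : seq ldef) (S0 : seq soft) : seq soft :=
  [seq (repl_clause defs s.1, s.2) | s <- S0].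

(* msc : option int, None standing for infinity *)
Definition le_msc (c : nat) (msc : option int) : bool :=
  if msc is Some m then c%:Z <= m else true.

Definition lex_le (p q : nat * nat) : bool :=
  (p.1 < q.1)%N || ((p.1 == q.1) && (p.2 <= q.2)%N).

Inductive oresult := OUnsat | OModel of assignment.

Definition oracle_spec (H : seq clause) (S : seq soft) (B : seq bound)
    (msc : option int) (r : oresult) : Prop :=
  match r with
  | OUnsat => forall a, sat_hard a H -> ~~ le_msc (cost_S a S) msc
  | OModel M =>
      [/\ sat_hard M H, le_msc (cost_S M S) msc &
          forall a, sat_hard a H -> le_msc (cost_S a S) msc ->
            lex_le (cost_B M B, cost_S M S) (cost_B a B, cost_S a S)]
  end.

Inductive result := RSat of assignment | RUnsat | RUnknown.

Definition relax (M : assignment) (b : bound) : bound :=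
  match b with Lower v _ => Lower v (M v) | Upper v _ => Upper v (M v) end.

Definition update_B (M : assignment) (sel : nat -> bool) (B : seq bound) : seq bound :=
  [seq (if sel i then relax M (nth (Lower 0 0) B i) else nth (Lower 0 0) B i)
     | i <- iota 0 (size B)].

Definition new_splits (H0 : seq clause) (defs : seq ldef) (Bold Bnew : seq bound)
    : seq clause :=
  splits defs (fun v => [seq K <- dom_range (f0_bounds H0 ++ Bnew) v
                          | K \notin dom_range (f0_bounds H0 ++ Bold) v]).

(* The oracle answers and the choices made
   are arbitrary subject to their specifications; the time limit may be
   exceeded at any iteration. *)
Inductive run (H0 : seq clause) (defs : seq ldef) (S : seq soft) :
    seq clause -> seq bound -> option assignment -> option int -> result -> Prop :=
  | run_timeout H B bsf msc : run H0 defs S H B bsf msc RUnknown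
  | run_unsat H B bsf msc :
      oracle_spec H S B msc OUnsat ->
      run H0 defs S H B bsf msc (if bsf is Some M then RSat M else RUnsat)
  | run_found H B bsf msc M r :
      oracle_spec H S B msc (OModel M) ->
      cost_B M B = 0%N ->
      run H0 defs S H B (Some M) (Some ((cost_S M S)%:Z - 1)) r ->
      run H0 defs S H B bsf msc r
  | run_refine H B bsf msc M (sel : nat -> bool) r :
      oracle_spec H S B msc (OModel M) ->
      cost_B M B <> 0%N ->
      (exists2 i, (i < size B)%N & sel i) ->
      (forall i, (i < size B)%N -> sel i -> ~~ sat_bound M (nth (Lower 0 0) B i)) ->
      run H0 defs S (H ++ new_splits H0 defs B (update_B M sel B))
          (update_B M sel B) bsf msc r ->
      run H0 defs S H B bsf msc r.

Definition solve_maxsmt (H0 : seq clause) (S0 : seq soft) (r : result) : Prop :=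
  exists (B : seq bound) (defs : seq ldef),
    lin_ok H0 S0 B defs /\
    run H0 defs (lin_S defs S0) (init_H H0 B defs) B None None r.

(* Main.v *)
Require Import Defs.
From mathcomp Require Import all_boot all_order all_algebra zify.
Import Order.TTheory GRing.Theory Num.Theory.
Set Implicit Arguments. Unset Strict Implicit.
Local Open Scope ring_scope.

Lemma maxle (x a b : int) : (Num.max a b <= x) = (a <= x) && (b <= x).
Proof. lia. Qed.
Lemma minle (x a b : int) : (x <= Num.min a b) = (x <= a) && (x <= b).
Proof. lia. Qed.

Lemma eval_mono1 a v : eval_mono a [:: v] = a v.
Proof. by rewrite /eval_mono big_seq1. Qed.
Lemma eval_mono0 a : eval_mono a [::] = 1.
Proof. by rewrite /eval_mono big_nil. Qed.

Lemma eval_mono_split a v m :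
  eval_mono a m = a v ^+ count_mem v m * eval_mono a (filter (predC1 v) m).
Proof.
rewrite /eval_mono; elim: m => [|x m IH] /=; first by rewrite !big_nil expr0 mulr1.
rewrite big_cons IH; case: eqP => [->|ne] /=.
  by rewrite add1n exprS mulrA.
by rewrite big_cons add0n mulrCA.
Qed.

Lemma find_defP defs m d : find_def defs m = Some d ->
  List.In d defs /\ perm_eq (ld_mono d) m.
Proof.
rewrite /find_def; elim: defs => [|d' defs IH] //=.
case: ifP => [pe [<-]|_ /IH [? ?]]; split => //; [by left|by right].
Qed.

Definition lin_sem (defs : seq ldef) (M : assignment) :=
  forall d, List.In d defs -> M (ld_fresh d) = eval_mono M (ld_mono d).

Lemma repl_term_eval defs M t : lin_sem defs M ->
  (repl_term defs t).1 * eval_mono M (repl_term defs t).2 = t.1 * eval_mono M t.2.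
Proof.
move=> LS; rewrite /repl_term; case: ifP => // _.
case E: find_def => [d|] //=.
have [/LS Hd pe] := find_defP E.
by rewrite eval_mono1 Hd /eval_mono (perm_big _ pe).
Qed.

Lemma repl_poly_eval defs M p : lin_sem defs M ->
  eval_poly M [seq repl_term defs t | t <- p] = eval_poly M p.
Proof.
move=> LS; rewrite /eval_poly big_map; apply: eq_bigr => t _.
exact: repl_term_eval.
Qed.

Lemma repl_clause_sat defs M C : lin_sem defs M ->
  sat_clause M (repl_clause defs C) = sat_clause M C.
Proof.
move=> LS; rewrite /sat_clause /repl_clause has_map; apply: eq_has => l.
by rewrite /sat_atom /= repl_poly_eval.
Qed.

Lemma sat_hard_repl defs M Hs : lin_sem defs M ->
  sat_hard M [seq repl_clause defs C | C <- Hs] = sat_hard M Hs.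
Proof.
move=> LS; rewrite /sat_hard all_map; apply: eq_all => C /=.
exact: repl_clause_sat.
Qed.

Lemma cost_S_map (f : soft -> soft) M S0 :
  (forall s, sat_clause M (f s).1 = sat_clause M s.1) -> (forall s, (f s).2 = s.2) ->
  cost_S M (map f S0) = cost_S M S0.
Proof.
move=> H1 H2; rewrite /cost_S big_map; elim: S0 => [|s S0 IH]; first by rewrite !big_nil.
by rewrite !big_cons H1 H2 IH.
Qed.

Lemma cost_lin defs M S0 : lin_sem defs M ->
  cost_S M (lin_S defs S0) = cost_S M S0.
Proof.
move=> LS; apply: cost_S_map => // s /=; exact: repl_clause_sat.
Qed.

Definition shape (b : bound) : bool * var :=
  match b with Lower v _ => (true, v) | Upper v _ => (false, v) end.

Lemma lowers_nil bs v : (lowers bs v == [::]) = ((true, v) \notin map shape bs).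
Proof.
elim: bs => [|b bs IH] //=; rewrite in_cons.
case: b => w L /=; last exact: IH.
case: (w =P v) => [->|ne] /=; first by rewrite eqxx.
rewrite IH xpair_eqE /=; congr (~~ _).
by have -> : (v == w) = false by apply/eqP=> e; apply: ne; rewrite e.
Qed.

Lemma uppers_nil bs v : (uppers bs v == [::]) = ((false, v) \notin map shape bs).
Proof.
elim: bs => [|b bs IH] //=; rewrite in_cons.
case: b => w L /=; first exact: IH.
case: (w =P v) => [->|ne] /=; first by rewrite eqxx.
rewrite IH xpair_eqE /=; congr (~~ _).
by have -> : (v == w) = false by apply/eqP=> e; apply: ne; rewrite e.
Qed.

Lemma dom_of_some bs v :
  (dom_of bs v != None) = (lowers bs v != [::]) && (uppers bs v != [::]).
Proof. by rewrite /dom_of; case: lowers => [|? ?]; case: uppers. Qed.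

Lemma dom_of_shape bs1 bs2 v : map shape bs1 = map shape bs2 ->
  (dom_of bs1 v != None) = (dom_of bs2 v != None).
Proof. by move=> E; rewrite !dom_of_some !lowers_nil !uppers_nil E. Qed.

Lemma update_B_shape M sel B : map shape (update_B M sel B) = map shape B.
Proof.
rewrite /update_B -map_comp.
rewrite -[in RHS](mkseq_nth (Lower 0 0) B) /mkseq -map_comp.
apply: eq_map => i /=; case: sel => //.
by case: (nth _ B i).
Qed.

Lemma lowers_le M bs v L : all (sat_bound M) bs -> L \in lowers bs v -> L <= M v.
Proof.
elim: bs => [|b bs IH] //= /andP[sb sbs].
case: b sb => w K /= sb; rewrite /lowers /= -/(lowers bs v); last exact: (IH sbs).
case: (w =P v) sb => [->|_] sb /=; last exact: (IH sbs).
by rewrite in_cons => /orP[/eqP->|]; [|apply: (IH sbs)].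
Qed.

Lemma uppers_ge M bs v U : all (sat_bound M) bs -> U \in uppers bs v -> M v <= U.
Proof.
elim: bs => [|b bs IH] //= /andP[sb sbs].
case: b sb => w K /= sb; rewrite /uppers /= -/(uppers bs v); first exact: (IH sbs).
case: (w =P v) sb => [->|_] sb /=; last exact: (IH sbs).
by rewrite in_cons => /orP[/eqP->|]; [|apply: (IH sbs)].
Qed.

Lemma foldr_max_le (x l : int) ls : l <= x -> (forall y, y \in ls -> y <= x) ->
  foldr Num.max l ls <= x.
Proof.
elim: ls => [|y ls IH] //= hl hy.
by rewrite maxle hy ?mem_head // IH // => z hz; apply: hy; rewrite in_cons hz orbT.
Qed.

Lemma foldr_min_ge (x l : int) ls : x <= l -> (forall y, y \in ls -> x <= y) ->
  x <= foldr Num.min l ls.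
Proof.
elim: ls => [|y ls IH] //= hl hy.
by rewrite minle hy ?mem_head // IH // => z hz; apply: hy; rewrite in_cons hz orbT.
Qed.

Lemma in_irange (x l u : int) : l <= x -> x <= u -> x \in irange l u.
Proof.
move=> hl hu; rewrite /irange.
have -> : l <= u by apply: le_trans hu.
apply/mapP; exists `|x - l|%N; first by rewrite mem_iota; lia.
lia.
Qed.

Lemma dom_range_mem M bs v : all (sat_bound M) bs -> dom_of bs v != None ->
  M v \in dom_range bs v.
Proof.
move=> S; rewrite /dom_range; case E: dom_of => [[l u]|] // _.
move: E; rewrite /dom_of.
case El: lowers => [|l0 ls] //; case Eu: uppers => [|u0 us] //= [<- <-].
apply: in_irange.
  apply: foldr_max_le => [|y hy]; apply: (lowers_le S); rewrite El ?mem_head //.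
  by rewrite in_cons hy orbT.
apply: foldr_min_ge => [|y hy]; apply: (uppers_ge S); rewrite Eu ?mem_head //.
by rewrite in_cons hy orbT.
Qed.

Lemma cost_B0 M B : cost_B M B = 0%N -> all (sat_bound M) B.
Proof.
rewrite /cost_B; elim: B => [|b B IH] //=.
by case: sat_bound => //= /IH.
Qed.

Lemma clause_bound_sat defs M C b : clause_bound C = Some b ->
  sat_clause M (repl_clause defs C) -> sat_bound M b.
Proof.
case: C => [|[p c] rest] //.
case: p => [|[a m] p]; first by case: c.
case: m => [|v [|]]; try by case: c.
case: p => [|[c0 m2] p]; first by case: c.
case: m2 => [|? ?]; last by case: c.
case: p => [|? ?]; last by case: c.
case: rest => [|? ?]; last by case: c.
case: c => //=; case: ifP => // /eqP -> [<-];
rewrite /sat_clause /repl_clause /= /repl_term /= /sat_atom /eval_poly /=;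
rewrite !big_cons big_nil eval_mono1 eval_mono0 orbF /=.
all: lia.
Qed.

Lemma f0_sat defs M Hs : sat_hard M [seq repl_clause defs C | C <- Hs] ->
  all (sat_bound M) (f0_bounds Hs).
Proof.
rewrite /f0_bounds; elim: Hs => [|C Hs IH] //= /andP[sC sH].
case E: clause_bound => [b|] /=; last exact: IH.
by rewrite (clause_bound_sat E sC) IH.
Qed.

Lemma repl_term_eval' defs M t :
  (forall d, List.In d defs -> perm_eq (ld_mono d) t.2 ->
     M (ld_fresh d) = eval_mono M (ld_mono d)) ->
  (repl_term defs t).1 * eval_mono M (repl_term defs t).2 = t.1 * eval_mono M t.2.
Proof.
move=> LS; rewrite /repl_term; case: ifP => // _.
case E: find_def => [d|] //=.
have [Hin pe] := find_defP E.
by rewrite eval_mono1 (LS _ Hin pe) /eval_mono (perm_big _ pe).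
Qed.

Lemma size_rest d : ld_var d \in ld_mono d -> (size (ld_rest d) < size (ld_mono d))%N.
Proof.
move=> h; rewrite /ld_rest size_filter -(count_predC (pred1 (ld_var d)) (ld_mono d)).
have : (0 < count_mem (ld_var d) (ld_mono d))%N.
  rewrite lt0n; apply/negP => /eqP /count_memPn; by rewrite h.
set c1 := count _ _; set c2 := count _ _; lia.
Qed.

Lemma lin_sem_of defs M (dom : var -> seq int) :
  (forall d, List.In d defs -> ld_var d \in ld_mono d) ->
  (forall d, List.In d defs -> M (ld_var d) \in dom (ld_var d)) ->
  (forall d K, List.In d defs -> K \in dom (ld_var d) ->
     sat_clause M (split_clause defs d K)) ->
  lin_sem defs M.
Proof.
move=> Hv Hdom Hsp.
suff S : forall n d, List.In d defs -> (size (ld_mono d) <= n)%N ->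
   M (ld_fresh d) = eval_mono M (ld_mono d).
  by move=> d Hd; exact: (S _ d Hd (leqnn _)).
elim=> [|n IH] d Hd Hs.
  by move: (Hv d Hd); case: (ld_mono d) Hs.
have := Hsp d _ Hd (Hdom d Hd).
rewrite /sat_clause /split_clause /= /sat_atom /= /eval_poly /=.
rewrite !big_cons !big_nil eval_mono1 eval_mono0 !mulr1 mul1r addr0 subrr eqxx /=.
rewrite orbF.
rewrite (@repl_term_eval' defs M (- M (ld_var d) ^+ ld_exp d, ld_rest d)).
  move=> /eqP E /=.
  rewrite (eval_mono_split M (ld_var d)) -/(ld_exp d) -/(ld_rest d).
  apply/eqP; rewrite -subr_eq0; apply/eqP; rewrite -E mulNr.
  by rewrite eval_mono1 mul1r addr0.
move=> d' Hd' /= pe; apply: IH => //.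
rewrite (perm_size pe).
rewrite -ltnS; exact: leq_trans (size_rest (Hv d Hd)) Hs.
Qed.


Lemma split_sat defs M d K : lin_sem defs M -> List.In d defs ->
  sat_clause M (split_clause defs d K).
Proof.
move=> LS Hd; rewrite /sat_clause /split_clause /= /sat_atom /= /eval_poly /=.
rewrite !big_cons !big_nil eval_mono1 eval_mono0 !mulr1 mul1r !addr0.
have [E|NE] := eqVneq (M (ld_var d)) K; last by rewrite subr_eq0 NE.
rewrite (repl_term_eval _ LS) /= orbF; apply/orP; right.
by rewrite mul1r eval_mono1 (LS d Hd) (eval_mono_split M (ld_var d)) E mulNr subrr.
Qed.

Lemma has_In (T : Type) (p : pred T) s : has p s -> exists x, List.In x s /\ p x.
Proof.
elim: s => [|x s IH] //= /orP[h|/IH [y [h1 h2]]]; [exists x|exists y]; split => //; by [left|right].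
Qed.

Lemma In_map_mem (T : Type) (f : T -> nat) s x : List.In x s -> f x \in map f s.
Proof. elim: s => [|y s IH] //= [->|/IH h]; by rewrite in_cons ?eqxx // h orbT. Qed.

Lemma sat_clause_eq a b C :
  (forall m, m \in monos_clause C -> eval_mono a m = eval_mono b m) ->
  sat_clause a C = sat_clause b C.
Proof.
elim: C => [|l C IH] //= h.
rewrite /monos_clause /= in h.
rewrite IH; last by move=> m hm; apply: h; rewrite mem_cat hm orbT.
congr orb; rewrite /sat_atom /eval_poly; congr eval_cmp.
apply: eq_big_seq => t ht; rewrite h // mem_cat; apply/orP; left.
by apply/mapP; exists t.
Qed.

Lemma sat_hard_eq a b Hs :
  (forall m, m \in flatten [seq monos_clause C | C <- Hs] -> eval_mono a m = eval_mono b m) ->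
  sat_hard a Hs = sat_hard b Hs.
Proof.
elim: Hs => [|C Hs IH] //= h.
rewrite (sat_clause_eq (a:=a) (b:=b)); last by move=> m hm; apply: h; rewrite mem_cat hm.
by rewrite IH // => m hm; apply: h; rewrite mem_cat hm orbT.
Qed.

Lemma cost_S_eq a b Ss :
  (forall m, m \in flatten [seq monos_clause s.1 | s <- Ss] -> eval_mono a m = eval_mono b m) ->
  cost_S a Ss = cost_S b Ss.
Proof.
rewrite /cost_S; elim: Ss => [|s Ss IH] /= h; first by rewrite !big_nil.
rewrite !big_cons (sat_clause_eq (a:=a) (b:=b)); last by move=> m hm; apply: h; rewrite mem_cat hm.
by rewrite IH // => m hm; apply: h; rewrite mem_cat hm orbT.
Qed.

Definition msz (defs : seq ldef) : nat := foldr (fun d n => maxn (size (ld_mono d)) n) 0%N defs.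

Lemma msz_ge defs d : List.In d defs -> (size (ld_mono d) <= msz defs)%N.
Proof.
elim: defs => [|d' defs IH] //= [->|/IH h]; first exact: leq_maxl.
exact: leq_trans h (leq_maxr _ _).
Qed.

Lemma support H0 S0 B defs : lin_ok H0 S0 B defs ->
  forall d, List.In d defs -> forall x, x \in ld_mono d -> x \in vars_F0 H0 S0.
Proof.
case=> _ _ _ H4 _.
suff S : forall n d, List.In d defs -> (msz defs - size (ld_mono d) <= n)%N ->
   forall x, x \in ld_mono d -> x \in vars_F0 H0 S0.
  by move=> d Hd; apply: (S _ d Hd (leqnn _)).
elim=> [|n IH] d Hd Hs x Hx.
  have [_ _ _ _ /orP[h|h]] := H4 d Hd.
    move: h => /hasP [m hm pe]; apply/flattenP; exists m => //.
    by rewrite -(perm_mem pe).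
  have [d' [Hd' pe]] := has_In h.
  have [_ hv _ _ _] := H4 d' Hd'.
  have := size_rest hv; rewrite (perm_size pe).
  have := msz_ge Hd'; move: Hs => a1 a2 a3; have a4 : (@size var (ld_mono d) < @size var (ld_mono d'))%N := a3; exfalso; lia.
have [_ _ _ _ /orP[h|h]] := H4 d Hd.
  move: h => /hasP [m hm pe]; apply/flattenP; exists m => //.
  by rewrite -(perm_mem pe).
have [d' [Hd' pe]] := has_In h.
have [_ hv _ _ _] := H4 d' Hd'.
apply: (IH d' Hd').
  have := size_rest hv; rewrite (perm_size pe).
  have := msz_ge Hd'; move: Hs => a1 a2 a3; have a4 : (@size var (ld_mono d) < @size var (ld_mono d'))%N := a3; lia.
by move: Hx; rewrite -(perm_mem pe) /ld_rest mem_filter => /andP[].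
Qed.

Definition ext (defs : seq ldef) (a : assignment) : assignment := fun v =>
  if ohead [seq d <- defs | ld_fresh d == v] is Some d then eval_mono a (ld_mono d) else a v.

Lemma ext_old defs a v : (forall d, List.In d defs -> ld_fresh d != v) -> ext defs a v = a v.
Proof.
rewrite /ext; elim: defs => [|d defs IH] //= h.
rewrite (negbTE (h d (or_introl erefl))); apply: IH => d' hd'; apply: h; by right.
Qed.

Lemma ext_fresh defs a d : uniq [seq ld_fresh d | d <- defs] -> List.In d defs ->
  ext defs a (ld_fresh d) = eval_mono a (ld_mono d).
Proof.
rewrite /ext; elim: defs => [|d0 defs IH] //= /andP[nin u] [->|hd]; first by rewrite eqxx.
have -> : (ld_fresh d0 == ld_fresh d) = false.
  by apply/negbTE; apply: contra nin => /eqP ->; apply: In_map_mem.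
exact: IH.
Qed.

Lemma eval_ext H0 S0 B defs a m : lin_ok H0 S0 B defs ->
  (forall x, x \in m -> x \in vars_F0 H0 S0) ->
  eval_mono (ext defs a) m = eval_mono a m.
Proof.
move=> [_ H2 _ _ _] hm; rewrite /eval_mono; apply: eq_big_seq => x hx.
apply: ext_old => d hd; have [h _] := H2 d hd.
by apply: contra h => /eqP ->; apply: hm.
Qed.

Lemma ext_lin_sem H0 S0 B defs a : lin_ok H0 S0 B defs -> lin_sem defs (ext defs a).
Proof.
move=> L d hd; have [H1 _ _ _ _] := L.
rewrite (ext_fresh _ H1 hd) (eval_ext _ L) //.
exact: support L d hd.
Qed.

Lemma ext_H0 H0 S0 B defs a : lin_ok H0 S0 B defs -> sat_hard a H0 ->
  sat_hard (ext defs a) [seq repl_clause defs C | C <- H0].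
Proof.
move=> L sa; rewrite (sat_hard_repl _ (ext_lin_sem a L)).
rewrite (sat_hard_eq (b:=a)) // => m hm; apply: (eval_ext _ L) => x hx.
by apply/flattenP; exists m => //; rewrite /monos_F0 mem_cat hm.
Qed.

Lemma ext_cost H0 S0 B defs a : lin_ok H0 S0 B defs ->
  cost_S (ext defs a) (lin_S defs S0) = cost_S a S0.
Proof.
move=> L; rewrite (cost_lin _ (ext_lin_sem a L)).
apply: cost_S_eq => m hm; apply: (eval_ext _ L) => x hx.
by apply/flattenP; exists m => //; rewrite /monos_F0 mem_cat hm orbT.
Qed.

Lemma splits_sat_all defs a dom : lin_sem defs a -> sat_hard a (splits defs dom).
Proof.
move=> LS; rewrite /splits.
suff : forall ds, (forall d, List.In d ds -> List.In d defs) ->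
  sat_hard a (flatten [seq [seq split_clause defs d K | K <- dom (ld_var d)] | d <- ds]).
  by apply.
elim=> [|d ds IH] //= h; rewrite /sat_hard all_cat; apply/andP; split.
  by rewrite all_map; apply/allP => K _ /=; apply: split_sat => //; apply: h; left.
by apply: IH => d' hd'; apply: h; right.
Qed.

Lemma splits_get defs a dom d K : sat_hard a (splits defs dom) -> List.In d defs ->
  K \in dom (ld_var d) -> sat_clause a (split_clause defs d K).
Proof.
rewrite /splits; move: defs => defs.
suff : forall ds, sat_hard a (flatten [seq [seq split_clause defs d K | K <- dom (ld_var d)] | d <- ds]) ->
  List.In d ds -> K \in dom (ld_var d) -> sat_clause a (split_clause defs d K).
  by apply.
elim=> [|d0 ds IH] //=.
rewrite /sat_hard all_cat => /andP[h1 h2] [E|hd] hK; last exact: IH.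
by move: h1; rewrite E all_map => /allP /(_ K hK).
Qed.

Definition I1 H0 defs (H : seq clause) := forall a, lin_sem defs a ->
  sat_hard a [seq repl_clause defs C | C <- H0] -> sat_hard a H.
Definition I2 H0 defs (H : seq clause) (B : seq bound) := forall a, sat_hard a H ->
  sat_hard a [seq repl_clause defs C | C <- H0] /\
  (forall d K, List.In d defs -> K \in dom_range (f0_bounds H0 ++ B) (ld_var d) ->
     sat_clause a (split_clause defs d K)).
Definition I3 H0 defs (B : seq bound) := forall d, List.In d defs ->
  dom_of (f0_bounds H0 ++ B) (ld_var d) != None.

Lemma good_model H0 S0 B0 defs H B M : lin_ok H0 S0 B0 defs ->
  I2 H0 defs H B -> I3 H0 defs B -> sat_hard M H -> all (sat_bound M) B ->
  sat_hard M H0 /\ cost_S M (lin_S defs S0) = cost_S M S0.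
Proof.
move=> L h2 h3 sM sB.
have [r1 r2] := h2 M sM.
have sb : all (sat_bound M) (f0_bounds H0 ++ B) by rewrite all_cat (f0_sat r1) sB.
have LS : lin_sem defs M.
  apply: (@lin_sem_of defs M (dom_range (f0_bounds H0 ++ B))) => //.
    by move=> d hd; have [_ _ _ H4 _] := L; have [] := H4 d hd.
  by move=> d hd; apply: dom_range_mem => //; apply: h3.
by rewrite -(sat_hard_repl _ LS) (cost_lin _ LS).
Qed.

Definition goal H0 S0 r :=
  (forall M : assignment, r = RSat M ->
     (exists a : assignment, sat_hard a H0) /\ sat_hard M H0 /\
     (forall a : assignment, sat_hard a H0 -> (cost_S M S0 <= cost_S a S0)%N)) /\
  (r = RUnsat -> forall a : assignment, ~~ sat_hard a H0).

Lemma run_ok H0 S0 B0 defs H B bsf msc r : lin_ok H0 S0 B0 defs ->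
  run H0 defs (lin_S defs S0) H B bsf msc r ->
  I1 H0 defs H -> I2 H0 defs H B -> I3 H0 defs B ->
  (bsf = None -> msc = None) ->
  (forall M, bsf = Some M -> msc = Some ((cost_S M S0)%:Z - 1) /\ sat_hard M H0) ->
  goal H0 S0 r.
Proof.
move=> L R; elim: R => {H B bsf msc r}.
- by move=> H B bsf msc _ _ _ _ _; split.
- move=> H B bsf msc O h1 h2 h3 hn hs.
  have ext_ok : forall a, sat_hard a H0 -> sat_hard (ext defs a) H /\
      cost_S (ext defs a) (lin_S defs S0) = cost_S a S0.
    move=> a sa; split; last exact: ext_cost L.
    by apply: h1; [exact: (ext_lin_sem a L)|exact: (ext_H0 L sa)].
  case: bsf hn hs => [M|] hn hs; split => //.
    move=> M' [<-]; have [hm sM] := hs M erefl; split; first by exists M.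
    split=> // a sa; have [se ce] := ext_ok a sa.
    move: (O _ se); rewrite ce hm /=; lia.
  move=> _ a; apply/negP => sa; have [se _] := ext_ok a sa.
  by move: (O _ se); rewrite hn.
- move=> H B bsf msc M r O cB _ IH h1 h2 h3 hn hs.
  have [sM _ _] := O.
  have [sH0 cM] := good_model L h2 h3 sM (cost_B0 cB).
  apply: IH => // M' [<-]; by rewrite cM.
- move=> H B bsf msc M sel r O cB hsel hviol _ IH h1 h2 h3 hn hs.
  apply: IH => //.
  + move=> a LS sa; rewrite /sat_hard all_cat -/(sat_hard a H) -/(sat_hard a (new_splits _ _ _ _)) (h1 a LS sa) /=.
    exact: splits_sat_all.
  + move=> a; rewrite /sat_hard all_cat => /andP[sa sn].
    have [r1 r2] := h2 a sa; split => // d K hd hK.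
    case hold: (K \in dom_range (f0_bounds H0 ++ B) (ld_var d)); first exact: r2.
    apply: (splits_get sn hd); by rewrite mem_filter hold hK.
  + move=> d hd; rewrite (@dom_of_shape _ (f0_bounds H0 ++ B)); first exact: h3.
    by rewrite !map_cat update_B_shape.
Qed.

Lemma theorem4p1_aux (H0 : seq clause) (S0 : seq soft) (r : result) :
  solve_maxsmt H0 S0 r -> goal H0 S0 r.
Proof.
move=> [B [defs [L R]]].
apply: (run_ok L R).
- move=> a LS sa; rewrite /init_H /sat_hard all_cat.
  rewrite -/(sat_hard a [seq repl_clause defs C | C <- H0]) sa /=.
  exact: splits_sat_all.
- move=> a; rewrite /init_H /sat_hard all_cat => /andP[s1 s2]; split => //.
  by move=> d K hd hK; apply: (splits_get s2 hd).
- by move=> d hd; have [_ _ _ H4 _] := L; have [] := H4 d hd.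
- by [].
- by [].
Qed.

Local Close Scope ring_scope.
Unset Implicit Arguments. Set Strict Implicit.

Theorem theorem4p1 (H0 : seq clause) (S0 : seq soft) (r : result) :
  all (fun s : soft => (0 < s.2)%N) S0 ->
  solve_maxsmt H0 S0 r ->
  (forall M : assignment, r = RSat M ->
     (exists a : assignment, sat_hard a H0) /\ sat_hard M H0 /\
     (forall a : assignment, sat_hard a H0 -> (cost_S M S0 <= cost_S a S0)%N)) /\
  (r = RUnsat -> forall a : assignment, ~~ sat_hard a H0).
Proof.
move=> _ hs; exact: (theorem4p1_aux hs).
Qed.
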